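(* Let $G=\langle X\rangle$ be a group, let $a,b\in G$ be elements of infinite order which are not proper powers in $G$, and let $H=\langle G,t\mid t^{-1}at=b\rangle$ be the HNN-extension of $G$ associated to the isomorphism $\langle a\rangle\to\langle b\rangle$, $a\mapsto b$. Then for every $g_0\in G$, if $g_0$ is not a proper power in $G$, then its image in $H$ is not a proper power in $H$.
   Context: An element $g$ of a group $K$ is a proper power in $K$ if $g=h^k$ for some $h\in K$ and some integer $k\ge2$. *)

(* Defs.v *)
Record Group := {
  gcar :> Type;
  gmul : gcar -> gcar -> gcar;
  gone : gcar;
  ginv : gcar -> gcar;
  gmulA : forall x y z, gmul x (gmul y z) = gmul (gmul x y) z;
  gmul1l : forall x, gmul gone x = x;
  gmulVl : forall x, gmul (ginv x) x = gone
}.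

Arguments gmul {g} _ _.
Arguments gone {g}.
Arguments ginv {g} _.

Fixpoint gpow {G : Group} (x : G) (n : nat) : G :=
  match n with
  | O => gone
  | S m => gmul x (gpow x m)
  end.

Definition is_hom {G K : Group} (f : G -> K) : Prop :=
  forall x y : G, f (gmul x y) = gmul (f x) (f y).

Definition infinite_order {G : Group} (g : G) : Prop :=
  forall n : nat, 0 < n -> gpow g n <> gone.

Definition proper_power {G : Group} (g : G) : Prop :=
  exists (h : G) (k : nat), 2 <= k /\ g = gpow h k.

(* (H, iota, t) is the HNN-extension < G, t | t^-1 a t = b >, characterized
   by the universal property of this presentation: iota : G -> H is a
   homomorphism, t^-1 iota(a) t = iota(b), and for every group K, every
   homomorphism f : G -> K and every s in K with s^-1 f(a) s = f(b) there is a
   unique homomorphism phi : H -> K with phi o iota = f and phi t = s. *)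
Definition is_HNN (G : Group) (a b : G) (H : Group) (iota : G -> H) (t : H)
  : Prop :=
  is_hom iota /\
  gmul (ginv t) (gmul (iota a) t) = iota b /\
  forall (K : Group) (f : G -> K) (s : K),
    is_hom f ->
    gmul (ginv s) (gmul (f a) s) = f b ->
    (exists phi : H -> K,
        is_hom phi /\ (forall g : G, phi (iota g) = f g) /\ phi t = s) /\
    (forall phi1 phi2 : H -> K,
        is_hom phi1 -> is_hom phi2 ->
        (forall g : G, phi1 (iota g) = phi2 (iota g)) ->
        phi1 t = phi2 t ->
        forall h : H, phi1 h = phi2 h).

(* Main.v *)
Require Import Defs.
From Stdlib Require Import List ZArith Lia Classical ClassicalEpsilon FunctionalExtensionality ProofIrrelevance PropExtensionality.
Import ListNotations.
Local Notation "x ** y" := (gmul x y) (at level 40, left associativity).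



Section GroupFacts.
Context {G : Group}.
Implicit Types x y z : G.

Lemma mA x y z : x ** (y ** z) = x ** y ** z. Proof. apply gmulA. Qed.
Lemma m1l x : gone ** x = x. Proof. apply gmul1l. Qed.
Lemma mVl x : ginv x ** x = gone. Proof. apply gmulVl. Qed.

Lemma mVr x : x ** ginv x = gone.
Proof.
  rewrite <- (m1l (x ** ginv x)).
  rewrite <- (mVl (ginv x)) at 1.
  rewrite <- mA, (mA (ginv x) x (ginv x)), mVl, m1l. apply mVl.
Qed.

Lemma m1r x : x ** gone = x.
Proof. rewrite <- (mVl x), mA, mVr, m1l. reflexivity. Qed.

Lemma mKl x y : ginv x ** (x ** y) = y.
Proof. rewrite mA, mVl, m1l. reflexivity. Qed.
Lemma mKVl x y : x ** (ginv x ** y) = y.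
Proof. rewrite mA, mVr, m1l. reflexivity. Qed.
Lemma mKr x y : x ** y ** ginv y = x.
Proof. rewrite <- mA, mVr, m1r. reflexivity. Qed.
Lemma mKVr x y : x ** ginv y ** y = x.
Proof. rewrite <- mA, mVl, m1r. reflexivity. Qed.

Lemma mcancl x y z : x ** y = x ** z -> y = z.
Proof. intro H. rewrite <- (mKl x y), H, mKl. reflexivity. Qed.
Lemma mcancr x y z : y ** x = z ** x -> y = z.
Proof. intro H. rewrite <- (mKr y x), H, mKr. reflexivity. Qed.

Lemma inv_uniq x y : x ** y = gone -> ginv x = y.
Proof. intro H. apply (mcancl x). rewrite mVr. auto. Qed.

Lemma invK x : ginv (ginv x) = x.
Proof. apply inv_uniq. apply mVl. Qed.
Lemma inv1 : ginv (gone : G) = gone.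
Proof. apply inv_uniq. apply m1l. Qed.
Lemma invM x y : ginv (x ** y) = ginv y ** ginv x.
Proof. apply inv_uniq. rewrite <- mA, (mA y), mVr, m1l, mVr. reflexivity. Qed.

Lemma gpowS_r x n : gpow x (S n) = gpow x n ** x.
Proof. induction n; simpl. rewrite m1r, m1l; auto. simpl in IHn. rewrite <- (mA x (gpow x n) x). f_equal. exact IHn. Qed.
Lemma gpow_add x m n : gpow x (m + n) = gpow x m ** gpow x n.
Proof. induction m; simpl. rewrite m1l; auto. rewrite IHm, mA; auto. Qed.
Lemma gpow_mul x m n : gpow x (m * n) = gpow (gpow x m) n.
Proof. induction n; simpl. rewrite Nat.mul_0_r; auto.
  rewrite Nat.mul_succ_r, Nat.add_comm, gpow_add, IHn; auto. Qed.
Lemma gpow1 n : gpow (gone : G) n = gone.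
Proof. induction n; simpl; auto. rewrite IHn, m1l; auto. Qed.
Lemma gpow_conj d x n : gpow (d ** x ** ginv d) n = d ** gpow x n ** ginv d.
Proof. induction n; simpl. rewrite m1r, mVr; auto.
  rewrite IHn. rewrite <- !mA. f_equal. f_equal. rewrite mA, mA, mVl, m1l. auto. Qed.
Lemma gpow_inv x n : gpow (ginv x) n = ginv (gpow x n).
Proof. induction n; simpl. rewrite inv1; auto. rewrite IHn, <- invM, <- gpowS_r. reflexivity. Qed.

Lemma pp_conj d x : proper_power x -> proper_power (d ** x ** ginv d).
Proof. intros [h [k [Hk ->]]]. exists (d ** h ** ginv d), k. split; auto. rewrite gpow_conj; auto. Qed.
Lemma pp_inv x : proper_power (ginv x) -> proper_power x.
Proof. intros [h [k [Hk Hx]]]. exists (ginv h), k. split; auto. rewrite gpow_inv, <- Hx, invK; auto. Qed.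

Definition zpow x (m : Z) : G :=
  match m with Z0 => gone | Zpos p => gpow x (Pos.to_nat p) | Zneg p => ginv (gpow x (Pos.to_nat p)) end.

Lemma zpow_of_nat x n : zpow x (Z.of_nat n) = gpow x n.
Proof. destruct n; simpl; auto. rewrite SuccNat2Pos.id_succ. auto. Qed.
Lemma zpow_opp x m : zpow x (- m) = ginv (zpow x m).
Proof. destruct m; simpl; auto. rewrite inv1; auto. rewrite invK; auto. Qed.

Lemma zpow_nonneg x m : (0 <= m)%Z -> zpow x m = gpow x (Z.to_nat m).
Proof. intro H. rewrite <- (Z2Nat.id m) at 1 by lia. apply zpow_of_nat. Qed.
Lemma zpow_neg x m : (m < 0)%Z -> zpow x m = ginv (gpow x (Z.to_nat (- m))).
Proof. intro H. replace m with (- (- m))%Z at 1 by lia. rewrite zpow_opp, zpow_nonneg by lia. auto. Qed.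

Lemma zpow_succ x m : zpow x (m + 1) = x ** zpow x m.
Proof.
  destruct (Z_lt_le_dec m 0).
  - destruct (Z.eq_dec m (-1)).
    + subst. simpl. rewrite m1r, mVr. auto.
    + rewrite (zpow_neg x m), (zpow_neg x (m+1)) by lia.
      replace (Z.to_nat (- m)) with (S (Z.to_nat (- (m+1)))) by lia.
      rewrite gpowS_r, invM, mKVl. auto.
  - rewrite !zpow_nonneg by lia. replace (Z.to_nat (m+1)) with (S (Z.to_nat m)) by lia. auto.
Qed.
Lemma zpow_pred x m : zpow x (m - 1) = ginv x ** zpow x m.
Proof. replace m with ((m - 1) + 1)%Z at 2 by lia. rewrite zpow_succ, mKl. auto. Qed.

Lemma zpow_add x m n : zpow x (m + n) = zpow x m ** zpow x n.
Proof.
  induction m using Z.peano_ind.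
  - simpl. rewrite m1l. auto.
  - replace (Z.succ m + n)%Z with ((m + n) + 1)%Z by lia. unfold Z.succ.
    rewrite !zpow_succ, IHm, mA. auto.
  - replace (Z.pred m + n)%Z with ((m + n) - 1)%Z by lia. unfold Z.pred.
    replace (m + -1)%Z with (m - 1)%Z by lia.
    rewrite !zpow_pred, IHm, mA. auto.
Qed.

Lemma zpow1 x : zpow x 1 = x. Proof. simpl. apply m1r. Qed.

Lemma zpow_inj x m n : infinite_order x -> zpow x m = zpow x n -> m = n.
Proof.
  intros Hinf E.
  assert (E2 : zpow x (m - n) = gone).
  { apply (mcancr (zpow x n)). rewrite <- zpow_add, m1l. replace (m - n + n)%Z with m by lia. auto. }
  destruct (Z.lt_trichotomy (m - n) 0) as [Hl|[He|Hg]].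
  - rewrite zpow_neg in E2 by lia. exfalso. apply (Hinf (Z.to_nat (- (m - n)))). lia.
    rewrite <- (invK (gpow _ _)), E2, inv1. auto.
  - lia.
  - rewrite zpow_nonneg in E2 by lia. exfalso. apply (Hinf (Z.to_nat (m - n))). lia. auto.
Qed.

Lemma zpow_pp x q : ~ proper_power x -> proper_power (zpow x q) -> (q <> 1 /\ q <> -1)%Z.
Proof.
  intros np P. split; intro; subst q.
  - apply np. rewrite zpow1 in P. auto.
  - apply np. apply pp_inv. simpl in P. rewrite m1r in P. auto.
Qed.

Lemma zpow_pp2 x q : (q <> 1 /\ q <> -1)%Z -> proper_power (zpow x q).
Proof.
  intros [H1 H2]. destruct (Z.lt_trichotomy q 0) as [Hl|[He|Hg]].
  - exists (ginv x), (Z.to_nat (- q)). split. lia. rewrite zpow_neg by lia. rewrite gpow_inv. auto.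
  - subst. exists gone, 2. split. auto. rewrite gpow1. auto.
  - exists x, (Z.to_nat q). split. lia. apply zpow_nonneg. lia.
Qed.

End GroupFacts.


Section Homs.
Variables G K : Group.
Variable f : G -> K.
Hypothesis hf : is_hom f.

Lemma hom1 : f gone = gone.
Proof. apply (mcancl (f gone)). rewrite <- hf, !m1r. auto. Qed.
Lemma homV x : f (ginv x) = ginv (f x).
Proof. symmetry. apply inv_uniq. rewrite <- hf, mVr. apply hom1. Qed.
Lemma hom_gpow x n : f (gpow x n) = gpow (f x) n.
Proof. induction n; simpl. apply hom1. rewrite hf, IHn. auto. Qed.
Lemma hom_zpow x m : f (zpow x m) = zpow (f x) m.
Proof. destruct m; simpl. apply hom1. apply hom_gpow. rewrite homV, hom_gpow. auto. Qed.
End Homs.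

Lemma comm_zpow (G : Group) (x y u : G) m : x ** u = u ** y -> zpow x m ** u = u ** zpow y m.
Proof.
  intro H.
  assert (Hn : forall n, gpow x n ** u = u ** gpow y n).
  { induction n; simpl. rewrite m1l, m1r; auto. rewrite <- mA, IHn, mA, H, mA. auto. }
  destruct m; simpl. rewrite m1l, m1r; auto. apply Hn.
  apply (mcancl (gpow x (Pos.to_nat p))). rewrite mKVl.
  rewrite mA, Hn, mKr. auto.
Qed.

Record perm (X : Type) := Perm { pf : X -> X; pg : X -> X;
  pfg : forall x, pf (pg x) = x; pgf : forall x, pg (pf x) = x }.
Arguments pf {X} _ _.
Arguments pg {X} _ _.

Lemma perm_ext X (p q : perm X) : (forall x, pf p x = pf q x) -> p = q.
Proof.
  intro H. destruct p as [f1 g1 e1 e2], q as [f2 g2 e3 e4]; simpl in *.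
  assert (f1 = f2) by (apply functional_extensionality; auto). subst f2.
  assert (g1 = g2).
  { apply functional_extensionality. intro x. rewrite <- (e3 x) at 1. rewrite e2. auto. }
  subst g2. f_equal; apply proof_irrelevance.
Qed.

Section Sym.
Variable X : Type.
Definition pmul (p q : perm X) : perm X.
  refine (Perm X (fun x => pf p (pf q x)) (fun x => pg q (pg p x)) _ _).
  - intro x. rewrite pfg, pfg. auto.
  - intro x. rewrite pgf, pgf. auto.
Defined.
Definition pone : perm X := Perm X (fun x => x) (fun x => x) (fun x => eq_refl) (fun x => eq_refl).
Definition pinv (p : perm X) : perm X := Perm X (pg p) (pf p) (pgf X p) (pfg X p).
Definition Sym : Group.
  refine (Build_Group (perm X) pmul pone pinv _ _ _).
  - intros. apply perm_ext. reflexivity.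
  - intros. apply perm_ext. reflexivity.
  - intros. apply perm_ext. intro. simpl. apply pgf.
Defined.
End Sym.


Section Gen.
Variables (G : Group) (a b : G) (H : Group) (iota : G -> H) (t : H).
Hypothesis hH : is_HNN G a b H iota t.

Definition Lm (h : H) : perm (H * bool).
  refine (Perm _ (fun p => (h ** fst p, snd p)) (fun p => (ginv h ** fst p, snd p)) _ _).
  - intros [x c]; simpl. rewrite mKVl. auto.
  - intros [x c]; simpl. rewrite mKl. auto.
Defined.

Lemma Lm_hom : is_hom (K := Sym (H * bool)) Lm.
Proof. intros x y. apply perm_ext. intros [u c]. simpl. rewrite mA. auto. Qed.

Lemma GEN (P : H -> Prop) :
  (forall g, P (iota g)) -> P t -> (forall x y, P x -> P y -> P (x ** y)) ->
  (forall x, P x -> P (ginv x)) -> forall h, P h.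
Proof.
  intros Pg Pt PM PV h.
  destruct hH as [hi [hrel U]].
  assert (P1 : P gone) by (rewrite <- (hom1 _ _ iota hi); auto).
  assert (PL : forall g x, P g -> (P (g ** x) <-> P x)).
  { intros g x Hg. split; intro. rewrite <- (mKl g x). apply PM; auto. apply PM; auto. }
  set (tau := fun p : H * bool => if excluded_middle_informative (P (fst p)) then p else (fst p, negb (snd p))).
  assert (tt : forall p, tau (tau p) = p).
  { intros [x c]. unfold tau; simpl. destruct (excluded_middle_informative (P x)); simpl.
    destruct (excluded_middle_informative (P x)); tauto.
    destruct (excluded_middle_informative (P x)); try tauto. rewrite Bool.negb_involutive. auto. }
  set (T := Perm _ tau tau tt tt : perm (H * bool)).
  set (phi2 := fun h => gmul (g := Sym (H * bool)) T (gmul (g := Sym (H*bool)) (Lm h) T)).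
  assert (Hf : is_hom (K := Sym (H * bool)) (fun g => Lm (iota g))).
  { intros x y. rewrite hi. apply Lm_hom. }
  assert (Hr : gmul (g := Sym (H*bool)) (ginv (g := Sym (H*bool)) (Lm t)) (gmul (g := Sym (H*bool)) (Lm (iota a)) (Lm t)) = Lm (iota b)).
  { rewrite <- hrel, !Lm_hom, (homV _ _ _ Lm_hom). auto. }
  destruct (U _ _ _ Hf Hr) as [_ Uniq].
  assert (E : Lm h = phi2 h).
  { apply Uniq.
    - apply Lm_hom.
    - intros x y. apply perm_ext. intro p. simpl. rewrite tt. simpl. rewrite mA. auto.
    - intro g. apply perm_ext. intros [x c]. simpl. unfold tau; simpl.
      destruct (excluded_middle_informative (P x)); simpl;
      destruct (excluded_middle_informative (P (iota g ** x))); simpl.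
      auto. exfalso. apply n. apply PM; auto. exfalso. apply n. apply (PL (iota g)); auto.
      rewrite Bool.negb_involutive. auto.
    - apply perm_ext. intros [x c]. simpl. unfold tau; simpl.
      destruct (excluded_middle_informative (P x)); simpl;
      destruct (excluded_middle_informative (P (t ** x))); simpl.
      auto. exfalso. apply n. apply PM; auto. exfalso. apply n. apply (PL t); auto.
      rewrite Bool.negb_involutive. auto. }
  destruct (classic (P h)) as [|nP]; auto. exfalso.
  assert (E2 := f_equal (fun q => pf q (gone, true)) E). simpl in E2.
  unfold tau in E2; simpl in E2.
  destruct (excluded_middle_informative (P gone)); [|tauto]. simpl in E2.
  destruct (excluded_middle_informative (P (h ** gone))) as [Q|_].
  rewrite m1r in Q. tauto. simpl in E2. congruence.
Qed.
End Gen.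


Section Model.
Context {G : Group} (a b : G).
Hypothesis ha : infinite_order a.
Hypothesis hb : infinite_order b.

Definition gen (e : bool) : G := if e then b else a.
Lemma gen_inf e : infinite_order (gen e). Proof. destruct e; auto. Qed.

Definition Em e (x : G) := exists m, x = zpow (gen e) m.

Lemma Em1 e : Em e gone. Proof. exists 0%Z. auto. Qed.
Lemma EmM e x y : Em e x -> Em e y -> Em e (x ** y).
Proof. intros [m ->] [n ->]. exists (m + n)%Z. rewrite zpow_add. auto. Qed.
Lemma EmV e x : Em e x -> Em e (ginv x).
Proof. intros [m ->]. exists (- m)%Z. rewrite zpow_opp. auto. Qed.
Lemma Emgen e : Em e (gen e). Proof. exists 1%Z. rewrite zpow1. auto. Qed.
Lemma Em_cr e x p : Em e (x ** p) -> Em e p -> Em e x.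
Proof. intros H1 H2. rewrite <- (mKr x p). apply EmM; auto. apply EmV; auto. Qed.
Lemma Em_cl e x p : Em e (p ** x) -> Em e p -> Em e x.
Proof. intros H1 H2. rewrite <- (mKl p x). apply EmM; auto. apply EmV; auto. Qed.

Definition expo e (x : G) : Z := epsilon (inhabits 0%Z) (fun m => x = zpow (gen e) m).
Definition theta e (x : G) : G := zpow (gen (negb e)) (expo e x).

Lemma expo_zpow e m : expo e (zpow (gen e) m) = m.
Proof.
  unfold expo. symmetry. apply (zpow_inj (gen e)). apply gen_inf.
  apply (epsilon_spec (inhabits 0%Z) (fun k => zpow (gen e) m = zpow (gen e) k)). eauto.
Qed.
Lemma theta_zpow e m : theta e (zpow (gen e) m) = zpow (gen (negb e)) m.
Proof. unfold theta. rewrite expo_zpow. auto. Qed.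
Lemma theta_E e x : Em (negb e) (theta e x).
Proof. exists (expo e x). auto. Qed.
Lemma theta_back e p : Em e p -> theta (negb e) (theta e p) = p.
Proof. intros [m ->]. rewrite theta_zpow, theta_zpow, Bool.negb_involutive. auto. Qed.
Lemma theta_gen e p : Em e p -> theta e (gen e ** p) = gen (negb e) ** theta e p.
Proof.
  intros [m ->]. rewrite <- (zpow1 (gen e)) at 1. rewrite <- zpow_add, !theta_zpow, zpow_add, zpow1. auto.
Qed.

Definition Prho e (x r : G) := Em e (x ** ginv r) /\ (Em e x -> r = gone).
Definition rho e (x : G) : G := epsilon (inhabits gone) (Prho e x).

Lemma rho_spec e x : Prho e x (rho e x).
Proof.
  unfold rho. apply epsilon_spec. destruct (classic (Em e x)).
  - exists gone. split. rewrite inv1, m1r; auto. auto.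
  - exists x. split. rewrite mVr. apply Em1. tauto.
Qed.
Lemma rho_inv e p x : Em e p -> rho e (p ** x) = rho e x.
Proof.
  intro Hp. unfold rho. f_equal. apply functional_extensionality. intro r.
  apply propositional_extensionality. unfold Prho. split; intros [H1 H2]; split.
  - apply (Em_cl _ _ p); auto. rewrite mA; auto.
  - intro. apply H2. apply EmM; auto.
  - rewrite <- mA. apply EmM; auto.
  - intro. apply H2. apply (Em_cl _ _ p); auto.
Qed.
Lemma rho_E e x : Em e x -> rho e x = gone.
Proof. intro. apply (rho_spec e x). auto. Qed.
Lemma rho_1 e x : rho e x = gone -> Em e x.
Proof. intro H. destruct (rho_spec e x) as [H1 _]. rewrite H, inv1, m1r in H1. auto. Qed.
Lemma rho_dec e x : x = (x ** ginv (rho e x)) ** rho e x.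
Proof. rewrite mKVr. auto. Qed.
Lemma rho_idem e x : rho e (rho e x) = rho e x.
Proof.
  rewrite (rho_dec e x) at 2. rewrite rho_inv. auto. apply (rho_spec e x).
Qed.
Lemma rho_eq e x y : rho e x = rho e y -> Em e (x ** ginv y).
Proof.
  intro H. destruct (rho_spec e x) as [H1 _]. destruct (rho_spec e y) as [H2 _].
  rewrite H in H1. replace (x ** ginv y) with ((x ** ginv (rho e y)) ** ginv (y ** ginv (rho e y))).
  apply EmM; auto. apply EmV; auto.
  rewrite invM, invK, mA, mKVr. auto.
Qed.

Definition NF := (G * list (bool * G))%type.
Definition hs (l : list (bool * G)) : option bool := match l with [] => None | (e, _) :: _ => Some e end.

Definition step (e : bool) (x : NF) : NF :=
  let (h, l) := x in
  let r := rho e h in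
  let p := h ** ginv r in
  if excluded_middle_informative (r = gone /\ hs l = Some (negb e)) then
    match l with (_, r') :: l'' => (theta e p ** r', l'') | [] => (h, l) end
  else (theta e p, (e, r) :: l).

Fixpoint vlist (l : list (bool * G)) : Prop :=
  match l with
  | [] => True
  | (e, r) :: l' => rho e r = r /\ ~ (r = gone /\ hs l' = Some (negb e)) /\ vlist l'
  end.

Lemma step_np e h l : ~ (rho e h = gone /\ hs l = Some (negb e)) ->
  step e (h, l) = (theta e (h ** ginv (rho e h)), (e, rho e h) :: l).
Proof. intro H. unfold step. destruct (excluded_middle_informative _); tauto. Qed.

Lemma step_p e h r' l : rho e h = gone ->
  step e (h, (negb e, r') :: l) = (theta e h ** r', l).
Proof. intro H. unfold step. destruct (excluded_middle_informative _) as [_|n].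
  rewrite H, inv1, m1r. auto. exfalso. apply n. simpl. auto. Qed.

Lemma step_cases e h l :
  (rho e h = gone /\ exists r' l', l = (negb e, r') :: l' /\ step e (h, l) = (theta e h ** r', l')) \/
  (~ (rho e h = gone /\ hs l = Some (negb e)) /\ step e (h, l) = (theta e (h ** ginv (rho e h)), (e, rho e h) :: l)).
Proof.
  destruct (classic (rho e h = gone /\ hs l = Some (negb e))) as [[H1 H2]|n].
  - left. split; auto. destruct l as [|[e' r'] l']; simpl in H2; try discriminate.
    injection H2; intros; subst. exists r', l'. split; auto. apply step_p; auto.
  - right. split; auto. apply step_np; auto.
Qed.

Lemma step_valid e h l : vlist l -> vlist (snd (step e (h, l))).
Proof.
  intro V. destruct (step_cases e h l) as [[H1 [r' [l' [-> ->]]]]|[H1 ->]]; simpl in *.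
  - tauto.
  - split. apply rho_idem. split; auto.
Qed.

Lemma step_back e h l : vlist l -> step (negb e) (step e (h, l)) = (h, l).
Proof.
  intro V. destruct (step_cases e h l) as [[H1 [r' [l' [-> ->]]]]|[H1 ->]].
  - simpl in V. destruct V as [Vr [Vn V']].
    assert (Eh : Em e h) by (apply rho_1; auto).
    rewrite step_np.
    + rewrite rho_inv, Vr, mKr, theta_back; auto. rewrite Bool.negb_involutive in *. auto.
      apply theta_E.
    + rewrite rho_inv, Vr; auto. apply theta_E.
  - assert (R1 : rho (negb e) (theta e (h ** ginv (rho e h))) = gone) by (apply rho_E, theta_E).
    pose proof (step_p (negb e) (theta e (h ** ginv (rho e h))) (rho e h) l R1) as SP.
    rewrite Bool.negb_involutive in SP. rewrite SP.
    rewrite theta_back. rewrite mKVr. auto. apply (rho_spec e h).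
Qed.

Lemma step_gen e h l : step e (gen e ** h, l) = let (u, v) := step e (h, l) in (gen (negb e) ** u, v).
Proof.
  assert (R : rho e (gen e ** h) = rho e h) by (apply rho_inv, Emgen).
  unfold step. rewrite R.
  assert (T : theta e (gen e ** h ** ginv (rho e h)) = gen (negb e) ** theta e (h ** ginv (rho e h))).
  { rewrite <- mA. apply theta_gen. apply (rho_spec e h). }
  rewrite T. destruct (excluded_middle_informative _); auto.
  destruct l as [|[e' r'] l']; simpl.
  exfalso. destruct a0 as [_ HH]; discriminate.
  rewrite mA. auto.
Qed.

End Model.


Section GL.
Context {G : Group} (a b : G).
Hypothesis ha : infinite_order a.
Hypothesis hb : infinite_order b.

Definition lmul (g : G) (x : NF) : NF := (g ** fst x, snd x).

Fixpoint actraw (S : list (bool * G)) (x : NF) : NF :=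
  match S with [] => x | (e, g) :: S' => step a b e (lmul g (actraw S' x)) end.

Fixpoint redl (l : list (bool * G)) : Prop :=
  match l with
  | [] => True
  | (e, g) :: l' => ~ (hs l' = Some (negb e) /\ Em a b e g) /\ redl l'
  end.

Lemma vlist_redl l : vlist a b l -> redl l.
Proof.
  induction l as [|[e r] l IH]; simpl; auto. intros [H1 [H2 H3]]. split; auto.
  intros [H4 H5]. apply H2. split; auto. rewrite <- H1. apply rho_E; auto.
Qed.

Lemma step_len e h l : length (snd (step a b e (h, l))) <= S (length l).
Proof.
  destruct (step_cases a b e h l) as [[_ [r' [l' [-> ->]]]]|[_ ->]]; simpl; lia.
Qed.

Lemma actraw_len S x : length (snd (actraw S x)) <= length S + length (snd x).
Proof.
  induction S as [|[e g] S IH]. simpl; auto.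
  change (actraw ((e,g)::S) x) with (step a b e (lmul g (actraw S x))).
  destruct (actraw S x) as [h l] eqn:E. change (lmul g (h, l)) with (g ** h, l).
  pose proof (step_len e (g ** h) l). change (length ((e,g)::S)) with (Datatypes.S (length S)). simpl in IH. lia.
Qed.

Lemma last_default {A : Type} (l : list A) x d d' : last (x :: l) d = last (x :: l) d'.
Proof. revert x. induction l; intros; simpl; auto. destruct l; auto. apply (IHl a0). Qed.

Lemma GLemma S : forall e1 g1 en gn (y : G) l,
  redl ((e1, g1) :: S) -> last ((e1, g1) :: S) (e1, g1) = (en, gn) ->
  ~ (Em a b en (gn ** y) /\ hs l = Some (negb en)) ->
  exists p L, actraw ((e1, g1) :: S) (y, l) = (p, L ++ (en, rho a b en (gn ** y)) :: l) /\
    Em a b (negb e1) p /\ length L = length S /\ hs (L ++ (en, rho a b en (gn ** y)) :: l) = Some e1.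
Proof.
  induction S as [|[e2 g2] S IH]; intros e1 g1 en gn y l R La J.
  - simpl in La. injection La; intros; subst. change (actraw [(en,gn)] (y,l)) with (step a b en (gn ** y, l)).
    rewrite step_np. exists (theta a b en (gn ** y ** ginv (rho a b en (gn ** y)))), [].
    repeat split; auto. apply theta_E.
    intros [H1 H2]. apply J. split; auto. apply rho_1; auto.
  - destruct R as [R1 R2].
    assert (La' : last ((e2, g2) :: S) (e2, g2) = (en, gn)).
    { rewrite <- La. change (last ((e1, g1) :: (e2, g2) :: S) (e1, g1)) with (last ((e2, g2) :: S) (e1, g1)). apply last_default. }
    destruct (IH e2 g2 en gn y l R2 La' J) as [p [L [E1 [E2 [E3 E4]]]]].
    change (actraw ((e1, g1) :: (e2, g2) :: S) (y, l)) with (step a b e1 (lmul g1 (actraw ((e2, g2) :: S) (y, l)))).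
    rewrite E1. unfold lmul. simpl fst. simpl snd.
    rewrite step_np.
    + eexists. exists ((e1, rho a b e1 (g1 ** p)) :: L). repeat split; simpl; auto. apply theta_E.
    + rewrite E4. intros [H1 H2]. injection H2; intro; subst e2. apply R1. split; auto.
      apply (Em_cr a b _ _ p); auto. apply rho_1; auto. rewrite Bool.negb_involutive in E2. auto.
Qed.

End GL.


Section HPart.
Context {G : Group} (a b : G).
Hypothesis ha : infinite_order a.
Hypothesis hb : infinite_order b.

Definition XT : Type := {x : @NF G | vlist a b (snd x)}.

Lemma sig_ext (x y : XT) : proj1_sig x = proj1_sig y -> x = y.
Proof. apply eq_sig_hprop. intros; apply proof_irrelevance. Qed.

Lemma step_valid' e (x : NF) : vlist a b (snd x) -> vlist a b (snd (step a b e x)).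
Proof. destruct x. apply step_valid. Qed.

Definition stepX e (x : XT) : XT := exist _ (step a b e (proj1_sig x)) (step_valid' e _ (proj2_sig x)).
Definition lgX (g : G) (x : XT) : XT := exist _ (lmul g (proj1_sig x)) (proj2_sig x).

Definition Lp (g : G) : perm XT.
  refine (Perm _ (lgX g) (lgX (ginv g)) _ _); intro x; apply sig_ext; destruct x as [[h l] v]; simpl;
  unfold lmul; simpl; rewrite ?mKVl, ?mKl; auto.
Defined.

Definition Tp : perm XT.
  refine (Perm _ (stepX true) (stepX false) _ _); intro x; apply sig_ext; destruct x as [[h l] v]; simpl.
  - apply (step_back a b ha hb false h l v).
  - apply (step_back a b ha hb true h l v).
Defined.

Lemma Lp_hom : is_hom (K := Sym XT) Lp.
Proof. intros x y. apply perm_ext. intro z. apply sig_ext. simpl. unfold lmul. simpl. rewrite mA. auto. Qed.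

Lemma Tp_rel : gmul (g := Sym XT) (ginv (g := Sym XT) Tp) (gmul (g := Sym XT) (Lp a) Tp) = Lp b.
Proof.
  apply perm_ext. intro x. simpl.
  assert (E : stepX true (lgX b x) = lgX a (stepX true x)).
  { apply sig_ext. destruct x as [[h l] v].
    change (step a b true (gen a b true ** h, l) = lmul a (step a b true (h, l))).
    rewrite (step_gen a b ha hb true h l).
    destruct (step a b true (h, l)); auto. }
  rewrite <- E. apply sig_ext. destruct (lgX b x) as [[h l] v]. simpl.
  apply (step_back a b ha hb true h l v).
Qed.

Hypothesis npa : ~ proper_power a.
Hypothesis npb : ~ proper_power b.
Variables (H : Group) (iota : G -> H) (t : H).
Hypothesis hH : is_HNN G a b H iota t.
Variable phi : H -> Sym XT.
Hypothesis phom : is_hom phi.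
Hypothesis piota : forall g, phi (iota g) = Lp g.
Hypothesis pt : phi t = Tp.

Lemma hi : is_hom iota. Proof. apply hH. Qed.
Lemma hrel : ginv t ** (iota a ** t) = iota b. Proof. apply hH. Qed.

Definition base : XT := exist _ (gone, []) I.
Definition Nf (h : H) : NF := proj1_sig (pf (phi h) base).
Definition nu (h : H) : nat := length (snd (Nf h)).
Definition tp (e : bool) : H := if e then t else ginv t.
Fixpoint restw (S : list (bool * G)) : H :=
  match S with [] => gone | (e, g) :: S' => tp e ** iota g ** restw S' end.
Definition nfe (x : NF) : H := iota (fst x) ** restw (snd x).

Lemma phi_mul h k x : pf (phi (h ** k)) x = pf (phi h) (pf (phi k) x).
Proof. rewrite phom. auto. Qed.
Lemma phi_tp e x : pf (phi (tp e)) x = stepX e x.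
Proof. destruct e; simpl. rewrite pt. auto. rewrite (homV _ _ phi phom), pt. auto. Qed.
Lemma phi_one x : pf (phi gone) x = x.
Proof. rewrite (hom1 _ _ phi phom). auto. Qed.

Lemma phi_restw S x : proj1_sig (pf (phi (restw S)) x) = actraw a b S (proj1_sig x).
Proof.
  induction S as [|[e g] S IH]; simpl. rewrite phi_one. auto.
  rewrite !phi_mul, phi_tp, piota. simpl. rewrite IH. auto.
Qed.

Lemma HI e m : tp e ** iota (zpow (gen a b e) m) = iota (zpow (gen a b (negb e)) m) ** tp e.
Proof.
  assert (R : iota a ** t = t ** iota b).
  { rewrite <- hrel. rewrite mKVl. auto. }
  pose proof (comm_zpow H (iota a) (iota b) t m R) as C.
  rewrite <- !(hom_zpow _ _ iota hi) in C.
  destruct e; simpl. symmetry; exact C.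
  apply (mcancr t). rewrite mKVr, <- mA, C, mKl. auto.
Qed.

Lemma tp_inv e : ginv (tp e) = tp (negb e).
Proof. destruct e; simpl; auto. apply invK. Qed.

Lemma nfe_lmul g x : nfe (lmul g x) = iota g ** nfe x.
Proof. unfold nfe, lmul. simpl. rewrite hi, mA. auto. Qed.

Lemma nfe_step e h l : nfe (step a b e (h, l)) = tp e ** nfe (h, l).
Proof.
  unfold nfe.
  destruct (step_cases a b e h l) as [[H1 [r' [l' [-> ->]]]]|[H1 ->]]; simpl.
  - assert (Eh : Em a b e h) by (apply rho_1; auto). destruct Eh as [m ->].
    rewrite theta_zpow by auto. rewrite hi, (mA (tp e)), HI, <- (tp_inv e), <- !mA, mKVl. auto.
  - destruct (rho_spec a b e h) as [[m Em] _].
    rewrite Em, theta_zpow by auto.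
    rewrite (rho_dec a b e h) at 2. rewrite Em, hi.
    rewrite <- !mA, (mA (tp e) (iota (zpow (gen a b e) m))), HI, <- !mA. auto.
Qed.

Lemma CL h : forall x, nfe (proj1_sig (pf (phi h) x)) = h ** nfe (proj1_sig x).
Proof.
  revert h. apply (GEN G a b H iota t hH (fun h => forall x, nfe (proj1_sig (pf (phi h) x)) = h ** nfe (proj1_sig x))).
  - intros g x. rewrite piota. simpl. apply nfe_lmul.
  - intro x. rewrite pt. simpl. destruct x as [[h l] v]. simpl. apply nfe_step.
  - intros x y Px Py z. rewrite phi_mul, Px, Py, mA. auto.
  - intros x Px z. set (y := pf (phi (ginv x)) z).
    assert (E : pf (phi x) y = z). { unfold y. rewrite <- phi_mul, mVr, phi_one. auto. }
    pose proof (Px y) as P. rewrite E in P. rewrite P, mKl. auto.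
Qed.

Lemma Nf_spec h : h = nfe (Nf h).
Proof. unfold Nf. rewrite CL. simpl. unfold nfe. simpl. rewrite (hom1 _ _ iota hi), !m1r. auto. Qed.

Lemma phi_Nf h x : proj1_sig (pf (phi h) x) = lmul (fst (Nf h)) (actraw a b (snd (Nf h)) (proj1_sig x)).
Proof.
  assert (E : pf (phi h) x = pf (phi (nfe (Nf h))) x) by (rewrite <- Nf_spec; auto).
  rewrite E. unfold nfe at 1. rewrite phi_mul, piota. simpl. rewrite phi_restw. auto.
Qed.

Lemma Nf_mul h k : Nf (h ** k) = lmul (fst (Nf h)) (actraw a b (snd (Nf h)) (Nf k)).
Proof. unfold Nf at 1. rewrite phi_mul, phi_Nf. auto. Qed.

Lemma Nf_iota g : Nf (iota g) = (g, []).
Proof. unfold Nf. rewrite piota. simpl. unfold lmul. simpl. rewrite m1r. auto. Qed.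

Lemma Nf_iota_mul g k : Nf (iota g ** k) = lmul g (Nf k).
Proof. unfold Nf. rewrite phi_mul, piota. auto. Qed.

Lemma iota_inj x y : iota x = iota y -> x = y.
Proof. intro E. pose proof (Nf_iota x) as A. rewrite E, Nf_iota in A. congruence. Qed.

Lemma Nf_valid h : vlist a b (snd (Nf h)).
Proof. unfold Nf. apply proj2_sig. Qed.

Lemma nu_mul h k : nu (h ** k) <= nu h + nu k.
Proof. unfold nu at 1. rewrite Nf_mul. simpl. apply actraw_len. Qed.

Lemma nu_iota_mul g k : nu (iota g ** k) = nu k.
Proof. unfold nu. rewrite Nf_iota_mul. auto. Qed.

Lemma nu_iota g : nu (iota g) = 0.
Proof. unfold nu. rewrite Nf_iota. auto. Qed.

Lemma nu_restw S : nu (restw S) <= length S.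
Proof. unfold nu, Nf. rewrite phi_restw. pose proof (actraw_len a b S (gone, [])). simpl in *. lia. Qed.

Lemma restw_app S e g : restw (S ++ [(e, g)]) = restw S ** (tp e ** iota g).
Proof.
  induction S as [|[e' g'] S IH]; simpl. rewrite !m1r, m1l. auto.
  rewrite IH, !mA. auto.
Qed.

Lemma vlist_in l e r : vlist a b l -> In (e, r) l -> rho a b e r = r.
Proof.
  induction l as [|[e' r'] l IH]; simpl. tauto.
  intros [V1 [_ V3]] [E|I]. injection E; intros; subst; auto. auto.
Qed.

Lemma nfe_Nf_eq h : h = iota (fst (Nf h)) ** restw (snd (Nf h)).
Proof. apply Nf_spec. Qed.

Lemma gen_np e : ~ proper_power (gen a b e).
Proof. destruct e; auto. Qed.

Lemma elliptic n : forall c, nu c = n -> forall y z, iota y ** c = c ** iota z ->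
  proper_power z -> proper_power y.
Proof.
  induction n as [n IH] using (well_founded_induction lt_wf).
  intros c Hn y z E Pz.
  pose proof (nfe_Nf_eq c) as Ec. pose proof (Nf_valid c) as Vc.
  unfold nu in Hn.
  destruct (Nf c) as [c0 lc] eqn:EN. simpl in Ec, Vc, Hn.
  destruct lc as [|[e1 g1] S].
  - simpl in Ec. rewrite m1r in Ec. subst c.
    rewrite <- !hi in E. apply iota_inj in E.
    replace y with (c0 ** z ** ginv c0). apply pp_conj; auto.
    rewrite <- E, mKr. auto.
  - destruct (last ((e1, g1) :: S) (e1, g1)) as [e r] eqn:La.
    assert (NZ : (e1, g1) :: S <> []) by discriminate.
    destruct (exists_last NZ) as [L [[e' r'] EL]].
    assert (Er : (e', r') = (e, r)).
    { rewrite <- La, EL. rewrite last_last. auto. }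
    injection Er; intros; subst e' r'. clear Er.
    pose proof (Nf_mul c (iota z)) as N1. rewrite EN, Nf_iota in N1. cbn [fst snd] in N1.
    destruct (GLemma a b S e1 g1 e r z [] (vlist_redl a b _ Vc) La) as [p [L' [A1 _]]].
    { simpl. intros [_ HH]; discriminate. }
    rewrite A1 in N1.
    pose proof (Nf_iota_mul y c) as N2. rewrite EN in N2.
    rewrite E, N1 in N2. unfold lmul in N2. simpl in N2. injection N2. intros N3 _.
    rewrite EL in N3. apply app_inj_tail in N3. destruct N3 as [_ N3]. injection N3. intro Rr.
    assert (Rr' : rho a b e r = r).
    { apply (vlist_in _ _ _ Vc). rewrite EL. apply in_or_app. right. left. auto. }
    assert (Rr2 : rho a b e (r ** z) = rho a b e r) by congruence. apply rho_eq in Rr2.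
    destruct Rr2 as [q Eq].
    set (c' := iota c0 ** restw L).
    assert (Ec' : c = c' ** (tp e ** iota r)).
    { rewrite Ec, EL, restw_app. unfold c'. rewrite mA. auto. }
    assert (Hnu : nu c' < n).
    { unfold c'. rewrite nu_iota_mul. pose proof (nu_restw L).
      rewrite <- Hn, EL, length_app. simpl. lia. }
    apply (IH (nu c') Hnu c' eq_refl y (zpow (gen a b (negb e)) q)).
    + rewrite Ec' in E.
      apply (mcancr (tp e ** iota r)). rewrite <- (mA (iota y)), E.
      rewrite <- !mA. f_equal.
      rewrite (mA (iota (zpow (gen a b (negb e)) q))), <- HI, <- Eq, !hi, (homV _ _ iota hi r).
      rewrite <- (mA (tp e) _ (iota r)). rewrite mKVr. auto.
    + apply zpow_pp2. apply (zpow_pp (gen a b e)). apply gen_np.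
      rewrite <- Eq. apply pp_conj. auto.
Qed.

Lemma power_grow h h0 e1 r1 Sl en rn :
  Nf h = (h0, (e1, r1) :: Sl) -> last ((e1, r1) :: Sl) (e1, r1) = (en, rn) ->
  ~ (e1 = negb en /\ Em a b en (rn ** h0)) ->
  forall j, exists p L, Nf (gpow h (S j)) = (h0 ** p, L) /\ Em a b (negb e1) p /\
    hs L = Some e1 /\ S j <= length L.
Proof.
  intros EN La Cy. pose proof (Nf_valid h) as Vh. rewrite EN in Vh. simpl snd in Vh.
  induction j as [|j IHj].
  - exists gone, ((e1, r1) :: Sl). change (gpow h 1) with (h ** gone). rewrite !m1r, EN.
    repeat split; simpl; auto. apply Em1. lia.
  - destruct IHj as [p [L [E1 [E2 [E3 E4]]]]].
    change (gpow h (S (S j))) with (h ** gpow h (S j)).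
    rewrite Nf_mul, EN, E1. cbn [fst snd].
    destruct (GLemma a b Sl e1 r1 en rn (h0 ** p) L (vlist_redl a b _ Vh) La) as [p' [L' [A1 [A2 [A3 A4]]]]].
    { intros [H1 H2]. rewrite E3 in H2. injection H2; intro; subst e1. apply Cy. split; auto.
      rewrite Bool.negb_involutive in E2. apply (Em_cr a b _ _ p); auto. rewrite <- mA; auto. }
    rewrite A1. exists p', (L' ++ (en, rho a b en (rn ** (h0 ** p))) :: L).
    unfold lmul. cbn [fst snd]. repeat split; auto. rewrite length_app. simpl. lia.
Qed.

Lemma shorten h h0 e1 r1 Sl en rn :
  Nf h = (h0, (e1, r1) :: Sl) -> last ((e1, r1) :: Sl) (e1, r1) = (en, rn) ->
  e1 = negb en -> Em a b en (rn ** h0) ->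
  exists d h', h = d ** h' ** ginv d /\ nu h' < nu h.
Proof.
  intros EN La E1 [q Eq].
  destruct Sl as [|x Sl0].
  - simpl in La. injection La; intros; subst. destruct en; discriminate.
  - assert (NZ : x :: Sl0 <> []) by discriminate.
    destruct (exists_last NZ) as [S2 [y EL]]. rewrite EL in La, EN.
    assert (Ey : y = (en, rn)).
    { rewrite <- La. change ((e1, r1) :: S2 ++ [y]) with (((e1, r1) :: S2) ++ [y]). rewrite last_last. auto. }
    subst y. clear EL NZ.
    pose proof (nfe_Nf_eq h) as Eh. rewrite EN in Eh. cbn [fst snd] in Eh.
    set (Z' := zpow (gen a b (negb en)) q).
    exists (iota h0 ** tp e1), (iota r1 ** restw S2 ** iota Z'). split.
    + apply (mcancr (iota h0 ** tp e1)). rewrite mKVr.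
      assert (K : tp en ** iota (rn ** h0) ** tp e1 = iota Z').
      { subst e1. rewrite Eq, HI, <- tp_inv, mKr. auto. }
      rewrite <- K. rewrite Eh at 1. change (restw ((e1, r1) :: S2 ++ [(en, rn)])) with (tp e1 ** iota r1 ** restw (S2 ++ [(en, rn)])).
      rewrite restw_app, hi. rewrite <- !mA. auto.
    + pose proof (nu_mul (iota r1 ** restw S2) (iota Z')) as M.
      rewrite nu_iota, nu_iota_mul in M. pose proof (nu_restw S2) as M2.
      unfold nu at 2. rewrite EN. cbn [snd length]. rewrite length_app. cbn [length]. lia.
Qed.

Lemma mainloop g0 k (Hk : 2 <= k) (ng0 : ~ proper_power g0) n :
  forall h c, nu h = n -> iota g0 ** c = c ** gpow h k -> False.
Proof.
  induction n as [n IH] using (well_founded_induction lt_wf).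
  intros h c Hn E.
  pose proof (nfe_Nf_eq h) as Eh.
  destruct (Nf h) as [h0 lh] eqn:EN. cbn [fst snd] in Eh.
  destruct lh as [|[e1 r1] Sl].
  - simpl in Eh. rewrite m1r in Eh. subst h.
    rewrite <- (hom_gpow _ _ iota hi) in E.
    apply ng0. apply (elliptic (nu c) c eq_refl g0 (gpow h0 k) E).
    exists h0, k. auto.
  - destruct (last ((e1, r1) :: Sl) (e1, r1)) as [en rn] eqn:La.
    destruct (classic (e1 = negb en /\ Em a b en (rn ** h0))) as [[C1 C2]|C].
    + destruct (shorten h h0 e1 r1 Sl en rn EN La C1 C2) as [d [h' [Ed Hnu]]].
      apply (IH (nu h') (ltac:(lia)) h' (c ** d) eq_refl).
      rewrite Ed, gpow_conj in E. rewrite mA, E, <- !mA, mVl, m1r. auto.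
    + set (N := nu (ginv c) + nu c).
      destruct (power_grow h h0 e1 r1 Sl en rn EN La C (k * S N - 1)) as [p [L [P1 [_ [_ P4]]]]].
      replace (S (k * S N - 1)) with (k * S N) in P1, P4 by lia.
      assert (NU : k * S N <= nu (gpow h (k * S N))) by (unfold nu; rewrite P1; auto).
      rewrite gpow_mul in NU.
      pose proof (comm_zpow H (iota g0) (gpow h k) c (Z.of_nat (S N)) E) as CZ.
      rewrite !zpow_of_nat in CZ.
      assert (EE : gpow (gpow h k) (S N) = ginv c ** (iota (gpow g0 (S N)) ** c)).
      { rewrite (hom_gpow _ _ iota hi), CZ, mKl. auto. }
      rewrite EE in NU. pose proof (nu_mul (ginv c) (iota (gpow g0 (S N)) ** c)) as M.
      rewrite nu_iota_mul in M. unfold N in *. nia.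
Qed.

End HPart.

Theorem lemma3p14 (G : Group) (a b : G)
  (ha : infinite_order a) (hb : infinite_order b)
  (npa : ~ proper_power a) (npb : ~ proper_power b)
  (H : Group) (iota : G -> H) (t : H)
  (hH : is_HNN G a b H iota t)
  (g0 : G) (ng0 : ~ proper_power g0) :
  ~ proper_power (iota g0).
Proof.
  intros [h [k [Hk E]]].
  destruct (proj1 (proj2 (proj2 hH) (Sym (XT a b)) (Lp a b) (Tp a b ha hb) (Lp_hom a b) (Tp_rel a b ha hb)))
    as [phi [phom [piota pt]]].
  eapply (mainloop a b ha hb npa npb H iota t hH phi phom piota pt g0 k Hk ng0 _ h gone eq_refl).
  rewrite m1r, m1l. auto.
Qed.
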